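(* Let $N\ge 2$ and $0<\gamma_1\le\dots\le\gamma_N$. There exists a sum-rate optimal spanning tree on $\{1,\dots,N\}$ in which vertex $N$ has degree $1$.
   Context: For distinct $i,j$ put $\varphi(i,j)=\log_2\!\big(\gamma_i+\frac{\gamma_i}{\gamma_i+\gamma_j}\big)$. For a spanning tree $T$ on $\{1,\dots,N\}$ with neighbor sets $A_i^T$, define $R_{\mathrm s}(T)=\frac{1}{2(N-1)}\sum_{i=1}^N \min_{j\in A_i^T}\varphi(i,j)$. A spanning tree is called sum-rate optimal if it maximizes $R_{\mathrm s}$ over all spanning trees on $\{1,\dots,N\}$. *)

(* Defs.v *)
From mathcomp Require Import all_boot.
From Stdlib Require Import Reals.

Set Implicit Arguments.
Unset Strict Implicit.
Unset Printing Implicit Defensive.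

(* Vertex i : 'I_N represents vertex i+1 of {1,...,N}. *)

Definition log2R (x : R) : R := (ln x / ln 2)%R.

Definition phi (N : nat) (gamma : 'I_N -> R) (i j : 'I_N) : R :=
  log2R (gamma i + gamma i / (gamma i + gamma j))%R.

Definition simple_graph (N : nat) (e : rel 'I_N) : Prop :=
  (forall x y, e x y = e y x) /\ (forall x, e x x = false).

Definition connected_graph (N : nat) (e : rel 'I_N) : Prop :=
  forall x y, connect e x y.

Definition acyclic_graph (N : nat) (e : rel 'I_N) : Prop :=
  ~ (exists (x : 'I_N) (p : seq 'I_N),
        [/\ 2 <= size p, uniq (x :: p), path e x p & e (last x p) x]).

Definition spanning_tree (N : nat) (e : rel 'I_N) : Prop :=
  simple_graph e /\ connected_graph e /\ acyclic_graph e.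

Definition nbrs (N : nat) (e : rel 'I_N) (i : 'I_N) : seq 'I_N :=
  [seq j <- enum 'I_N | e i j].

(* min_{j in A_i} phi(i,j); the neighbour set is nonempty for spanning trees
   with N >= 2 (the value 0 for an empty set is never used there). *)
Definition min_nbr_phi (N : nat) (gamma : 'I_N -> R) (e : rel 'I_N) (i : 'I_N) : R :=
  match nbrs e i with
  | [::] => 0%R
  | j0 :: s => foldr (fun j m => Rmin (phi gamma i j) m) (phi gamma i j0) s
  end.

Definition sum_rate (N : nat) (gamma : 'I_N -> R) (e : rel 'I_N) : R :=
  (/ (2 * (INR N - 1)) *
   foldr (fun i acc => min_nbr_phi gamma e i + acc) 0 (enum 'I_N))%R.

Definition sum_rate_optimal (N : nat) (gamma : 'I_N -> R) (e : rel 'I_N) : Prop :=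
  spanning_tree e /\
  (forall e' : rel 'I_N, spanning_tree e' -> (sum_rate gamma e' <= sum_rate gamma e)%R).

Definition degree (N : nat) (e : rel 'I_N) (v : 'I_N) : nat := size (nbrs e v).

(* Main.v *)
Require Import Defs.
From mathcomp Require Import all_boot.
From Stdlib Require Import Reals Lra.
From Stdlib Require Import FunctionalExtensionality.

Set Implicit Arguments.
Unset Strict Implicit.
Unset Printing Implicit Defensive.

Lemma foldr_min_le (T : eqType) (f : T -> R) j0 s j :
  j \in j0 :: s -> (foldr (fun j m => Rmin (f j) m) (f j0) s <= f j)%R.
Proof.
elim: s j => [|y s IH] j /=.
  by rewrite inE => /eqP ->; apply: Rle_refl.
rewrite !inE => /orP [/eqP ->|/orP [/eqP ->|H]].
- apply: Rle_trans (Rmin_r _ _) _. by apply: IH; rewrite inE eqxx.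
- by apply: Rmin_l.
- apply: Rle_trans (Rmin_r _ _) _. by apply: IH; rewrite inE H orbT.
Qed.

Lemma foldr_min_ge (T : eqType) (f : T -> R) j0 s c :
  (forall j, j \in j0 :: s -> (c <= f j)%R) ->
  (c <= foldr (fun j m => Rmin (f j) m) (f j0) s)%R.
Proof.
elim: s => [|y s IH] /= H.
  by apply: H; rewrite inE eqxx.
apply: Rmin_glb; first by apply: H; rewrite !inE eqxx orbT.
apply: IH => j Hj; apply: H; move: Hj; rewrite !inE => /orP [Hj|Hj]; rewrite Hj ?orbT //.
Qed.

Lemma mem_nbrs N (e : rel 'I_N) i j : (j \in nbrs e i) = e i j.
Proof. by rewrite /nbrs mem_filter mem_enum andbT. Qed.

Lemma min_le N (g : 'I_N -> R) (e : rel 'I_N) i j :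
  e i j -> (min_nbr_phi g e i <= phi g i j)%R.
Proof.
rewrite -mem_nbrs /min_nbr_phi; case: (nbrs e i) => [|j0 s] //.
exact: foldr_min_le.
Qed.

Lemma min_ge N (g : 'I_N -> R) (e : rel 'I_N) i c :
  (exists j, e i j) -> (forall j, e i j -> (c <= phi g i j)%R) ->
  (c <= min_nbr_phi g e i)%R.
Proof.
move=> [j Hj] H; move: Hj; rewrite -mem_nbrs /min_nbr_phi.
have H' : forall j, j \in nbrs e i -> (c <= phi g i j)%R.
  by move=> k; rewrite mem_nbrs; apply: H.
move: H'; case: (nbrs e i) => [|j0 s] // H' _.
exact: foldr_min_ge.
Qed.

Lemma foldr_sum_le (T : Type) (f g : T -> R) l :
  (forall i, (f i <= g i)%R) ->
  (foldr (fun i acc => f i + acc) 0 l <= foldr (fun i acc => g i + acc) 0 l)%R.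
Proof.
move=> H; elim: l => [|x l IH] /=; first by apply: Rle_refl.
by apply: Rplus_le_compat.
Qed.

Lemma sum_rate_le N (g : 'I_N -> R) (e e' : rel 'I_N) : 2 <= N ->
  (forall i, (min_nbr_phi g e i <= min_nbr_phi g e' i)%R) ->
  (sum_rate g e <= sum_rate g e')%R.
Proof.
move=> HN H; rewrite /sum_rate; apply: Rmult_le_compat_l; last exact: foldr_sum_le.
have : (2 <= INR N)%R by rewrite -[2%R]/(INR 2); apply: le_INR; apply/leP.
move=> H2; left; apply: Rinv_0_lt_compat; lra.
Qed.

Lemma phi_mono N (g : 'I_N -> R) i j k :
  (0 < g i)%R -> (0 < g j)%R -> (g j <= g k)%R -> (phi g i k <= phi g i j)%R.
Proof.
move=> Hi Hj Hjk; rewrite /phi /log2R.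
have Hl2 : (0 < ln 2)%R by have := ln_lt_2; lra.
apply: Rmult_le_compat_r; first by left; apply: Rinv_0_lt_compat.
have Hx : (0 < g i + g i / (g i + g k))%R.
  have : (0 < g i / (g i + g k))%R by apply: Rdiv_lt_0_compat; lra.
  lra.
have Hle : (g i + g i / (g i + g k) <= g i + g i / (g i + g j))%R.
  apply: Rplus_le_compat_l; rewrite /Rdiv; apply: Rmult_le_compat_l; first lra.
  apply: Rinv_le_contravar; lra.
case: (Rle_lt_or_eq_dec _ _ Hle) => [Hlt|->]; last by apply: Rle_refl.
by left; apply: ln_increasing.
Qed.

Lemma exists_max (T : eqType) (P : T -> Prop) (g : T -> R) (l : seq T) :
  (exists x, x \in l /\ P x) ->
  exists x, P x /\ forall y, y \in l -> P y -> (g y <= g x)%R.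
Proof.
elim: l => [|a l IH]; first by case=> x [].
case=> x [Hx Px].
case: (Classical_Prop.classic (exists x, x \in l /\ P x)) => [Hex|Hnex].
  case: (IH Hex) => m [Pm Hm].
  case: (Classical_Prop.classic (P a)) => Pa.
    case: (Rle_lt_dec (g a) (g m)) => Hc.
      exists m; split=> // y; rewrite inE => /orP [/eqP ->|Hy] Py //; exact: Hm.
    exists a; split=> // y; rewrite inE => /orP [/eqP ->|Hy] Py; first exact: Rle_refl.
    apply: Rle_trans (Hm _ Hy Py) _; lra.
  exists m; split=> // y; rewrite inE => /orP [/eqP ->|Hy] Py //; exact: Hm.
have Hxa : x = a.
  move: Hx; rewrite inE => /orP [/eqP //|Hx]; case: Hnex; by exists x.
subst x; exists a; split=> // y; rewrite inE => /orP [/eqP ->|Hy] Py.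
  exact: Rle_refl.
case: Hnex; by exists y.
Qed.

Lemma cyc_rot (T : eqType) (e : rel T) x p v :
  uniq (x :: p) -> path e x p -> e (last x p) x -> v \in x :: p ->
  exists s, [/\ size s = size p, uniq (v :: s), path e v s, e (last v s) v
     & forall w, (w \in v :: s) = (w \in x :: p)].
Proof.
move=> Hu Hp He Hv.
have Hc : cycle e (x :: p) by rewrite /= rcons_path Hp He.
case/rot_to: Hv => i s Hrot.
have := rot_cycle i e (x :: p); rewrite Hrot Hc /= rcons_path => /andP [H1 H2].
exists s; split=> //.
- by have := size_rot i (x :: p); rewrite Hrot /= => -[].
- by have := rot_uniq i (x :: p); rewrite Hrot Hu.
- by move=> w; rewrite -Hrot mem_rot.
Qed.

Lemma head_last_neq (T : eqType) (v : T) s :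
  uniq s -> 2 <= size s -> head v s != last v s.
Proof.
case: s => [|y [|z t]] //= /andP [Hy _] _.
apply/eqP => Hyz; move: Hy; rewrite Hyz.
by rewrite mem_last.
Qed.

Section Graph.
Variable N : nat.
Implicit Types e : rel 'I_N.

Definition star (c : 'I_N) : rel 'I_N :=
  fun x y => (x != y) && ((x == c) || (y == c)).

Lemma star_tree c : spanning_tree (star c).
Proof.
split; [split|split].
- by move=> x y; rewrite /star eq_sym orbC.
- by move=> x; rewrite /star eqxx.
- move=> x y.
  have Hc : forall z, connect (star c) z c.
    move=> z; case: (eqVneq z c) => [->|Hz]; first exact: connect0.
    by apply: connect1; rewrite /star Hz eqxx orbT.
  have Hc' : forall z, connect (star c) c z.
    move=> z; case: (eqVneq z c) => [->|Hz]; first exact: connect0.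
    by apply: connect1; rewrite /star eq_sym Hz eqxx.
  exact: connect_trans (Hc x) (Hc' y).
- case=> x [p [Hsz Hu Hp Hl]].
  case: (boolP (c \in x :: p)) => Hin.
    have [s [Hs Hus Hps _ _]] := cyc_rot Hu Hp Hl Hin.
    have Hsz' : 1 < size s by rewrite Hs.
    move: Hsz' Hus Hps; case: s {Hs} => [|y [|z t]] //= _.
    rewrite !inE !negb_or => /andP [/andP [Hcy /andP [Hcz _]] _] /and3P [_ Hyz _].
    by move: Hyz; rewrite /star [y == c]eq_sym (negbTE Hcy) [z == c]eq_sym (negbTE Hcz) /= andbF.
  move: Hsz Hp Hin; case: p {Hu Hl} => [|y t] //= _ /andP [Hxy _].
  rewrite !inE !negb_or => /andP [Hxc /andP [Hyc _]].
  by move: Hxy; rewrite /star [x == c]eq_sym (negbTE Hxc) [y == c]eq_sym (negbTE Hyc) /= andbF.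
Qed.

Lemma nbr_exists e x y : connected_graph e -> x != y -> exists j, e x j.
Proof.
move=> Hc Hxy; case/connectP: (Hc x y) => p.
case: p => [|j p] /=; first by move=> _ Hy; rewrite Hy eqxx in Hxy.
by move=> /andP [H _] _; exists j.
Qed.

Variables (e : rel 'I_N) (n a : 'I_N).
Hypothesis Htree : spanning_tree e.
Hypothesis Hna : e n a.

Definition e' : rel 'I_N := fun x y =>
  (x != y) && (if (x == n) || (y == n) then e x y && ((x == a) || (y == a))
               else [|| e x y, (x == a) && e y n | (y == a) && e x n]).

Lemma e_sym x y : e x y = e y x.
Proof. by case: Htree => [[H _] _]; apply: H. Qed.
Lemma e_irr x : e x x = false.
Proof. by case: Htree => [[_ H] _]; apply: H. Qed.

Lemma a_neq_n : a != n.
Proof. by apply/eqP => H; move: Hna; rewrite H e_irr. Qed.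

Lemma e'_sym x y : e' x y = e' y x.
Proof.
rewrite /e' [y == x]eq_sym (e_sym y x).
by case: (x == y); case: (x == n); case: (y == n); case: (x == a); case: (y == a);
  case: (e x y); case: (e y n); case: (e x n).
Qed.

Lemma e'_irr x : e' x x = false.
Proof. by rewrite /e' eqxx. Qed.

Lemma e'_na : e' n a.
Proof. by rewrite /e' eq_sym a_neq_n eqxx /= Hna eqxx orbT. Qed.

Lemma e'_cases x y : e' x y -> e x y \/ e x n.
Proof.
rewrite /e' => /andP [_]; case: ifP => _.
  by case/andP => H _; left.
case/or3P => [H|/andP [/eqP -> _]|/andP [_ H]]; [by left|right|by right].
by rewrite e_sym.
Qed.

Lemma e'_in x y : x != n -> x != a -> y != n -> y != a -> e' x y -> e x y.
Proof.
move=> Hxn Hxa Hyn Hya; rewrite /e' (negbTE Hxn) (negbTE Hyn) (negbTE Hxa) (negbTE Hya).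
by case/andP => _ /=; rewrite !orbF.
Qed.

Lemma e'_tree : spanning_tree e'.
Proof.
case: (Htree) => [_ [Hconn Hacyc]].
have Hsy : symmetric e' by move=> x y; apply: e'_sym.
split; [split|split].
- exact: e'_sym.
- exact: e'_irr.
- have L : forall y, e n y -> connect e' n y.
    move=> y Hy; case: (eqVneq y a) => [->|Hya]; first by apply: connect1; apply: e'_na.
    apply: connect_trans (connect1 e'_na) (connect1 _).
    have Hyn : y != n by apply/eqP => H; move: Hy; rewrite H e_irr.
    by rewrite /e' eq_sym Hya (negbTE a_neq_n) (negbTE Hyn) /= eqxx (e_sym y n) Hy orbT.
  have Hsub : subrel e (connect e').
    move=> x y Hxy.
    case: (eqVneq x n) => [Hx|Hxn]; first by rewrite Hx; apply: L; rewrite -Hx.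
    case: (eqVneq y n) => [Hy|Hyn].
      rewrite (sym_connect_sym Hsy) Hy; apply: L; by rewrite e_sym -Hy.
    apply: connect1; rewrite /e' (negbTE Hxn) (negbTE Hyn) /= Hxy andbT.
    by apply/eqP => H; move: Hxy; rewrite H e_irr.
  by move=> x y; apply: (connect_sub Hsub).
- case=> x [p [Hsz Hu Hp Hl]].
  case: (boolP (n \in x :: p)) => Hn.
    have [s [Hs Hus Hps Hls _]] := cyc_rot Hu Hp Hl Hn.
    have Hus' : uniq s by case/andP: Hus.
    have := head_last_neq n Hus'; rewrite Hs => /(_ Hsz).
    move: Hs Hps Hls; case: s {Hus Hus'} => [|h t]; first by move=> /= Hs0; rewrite -Hs0 in Hsz.
    move=> /= _ /andP [Hh _] Hlt.
    have Eh : h = a.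
      move: Hh; rewrite /e' eqxx /= => /andP [_ /andP [_]].
      by rewrite eq_sym (negbTE a_neq_n) => /eqP.
    have El : last h t = a.
      move: Hlt; rewrite /e' eqxx orbT => /andP [_ /andP [_]].
      by rewrite [n == a]eq_sym (negbTE a_neq_n) orbF => /eqP.
    by rewrite El Eh eqxx.
  case: (boolP (a \in x :: p)) => Ha.
    have [s [Hs Hus Hps Hls Hmem]] := cyc_rot Hu Hp Hl Ha.
    have Hns : n \notin a :: s by rewrite Hmem.
    move: Hs Hus Hps Hls Hns Hmem; case: s => [|h t]; first by move=> /= Hs0; rewrite -Hs0 in Hsz.
    move=> /= Hs Hus /andP [Hah Hpt] Hlt Hns _.
    have Hall : all [pred u | (u != n) && (u != a)] (h :: t).
      apply/allP => w Hw /=; apply/andP; split.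
        by apply/eqP => Hw'; move: Hns; rewrite -Hw' inE Hw orbT.
      by apply/eqP => Hw'; move: Hus; rewrite -Hw' Hw.
    have Hpt' : path e h t.
      apply: (sub_in_path _ Hall Hpt) => u v /andP [Hun Hua] /andP [Hvn Hva].
      exact: e'_in.
    have Hhn : h != n by case/andP: Hall => /andP [].
    have Hln : last h t != n.
      by have := allP Hall (last h t) (mem_last h t) => /andP [].
    have Hla : last h t != a.
      by have := allP Hall (last h t) (mem_last h t) => /andP [].
    have Hha : h != a by case/andP: Hall => /andP [].
    have Han := a_neq_n.
    have F1 : e a h || e h n.
      move: Hah; rewrite /e' (negbTE Han) (negbTE Hhn) (negbTE Hha) eqxx /=.
      by case/andP => _; rewrite orbF.
    have F2 : e (last h t) a || e (last h t) n.
      move: Hlt; rewrite /e' (negbTE Han) (negbTE Hln) (negbTE Hla) eqxx /=.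
      by [].
    have Hnht : n \notin h :: t by move: Hns; rewrite inE negb_or => /andP [_].
    have Hant : a \notin h :: t by case/andP: Hus.
    have Hut : uniq (h :: t) by case/andP: Hus.
    have Hst : 1 < size (h :: t) by move: Hs Hsz => /= ->.
    apply: Hacyc; case/orP: F1 => F1; case/orP: F2 => F2.
    + exists a, (h :: t); split; rewrite /= ?Hus ?F1 ?Hpt' ?F2 //.
    + exists a, (rcons (h :: t) n); split.
      * by rewrite size_rcons.
      * by rewrite -rcons_cons rcons_uniq Hns; exact: Hus.
      * by rewrite -cats1 cat_path /= F1 Hpt' F2.
      * by rewrite last_rcons; exact: Hna.
    + exists a, (n :: h :: t); split.
      * by [].
      * apply/andP; split; last by apply/andP; split.
        by rewrite inE negb_or Han Hant.
      * by rewrite /= (e_sym a n) Hna (e_sym n h) F1 Hpt'.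
      * by rewrite /= F2.
    + exists n, (h :: t); split; rewrite /= ?Hnht ?Hut ?(e_sym n h) ?F1 ?Hpt' ?F2 //.
  have Hall : all [pred u | (u != n) && (u != a)] (x :: p).
    apply/allP => w Hw /=; apply/andP; split.
      by apply/eqP => Hw'; move: Hn; rewrite -Hw' Hw.
    by apply/eqP => Hw'; move: Ha; rewrite -Hw' Hw.
  apply: Hacyc; exists x, p; split => //.
    apply: (sub_in_path _ Hall Hp) => u v /andP [Hun Hua] /andP [Hvn Hva].
    exact: e'_in.
  have := allP Hall (last x p) (mem_last x p) => /andP [H1 H2].
  have := allP Hall x (mem_head x p) => /andP [H3 H4].
  exact: e'_in.
Qed.

Lemma e'_sum (g : 'I_N -> R) : 2 <= N -> (forall i, (0 < g i)%R) ->
  (forall j, (g j <= g n)%R) -> (sum_rate g e <= sum_rate g e')%R.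
Proof.
move=> HN Hpos Hmax; apply: sum_rate_le => // i.
have [_ [Hc _]] := e'_tree.
apply: min_ge.
  case: (eqVneq i n) => [Hi|Hi].
    apply: (nbr_exists (y := a) Hc); rewrite Hi eq_sym; exact: a_neq_n.
  exact: (nbr_exists (y := n) Hc).
move=> j Hj; case: (e'_cases Hj) => H; first exact: min_le.
apply: Rle_trans (min_le g H) _.
by apply: phi_mono.
Qed.

Lemma e'_deg : degree e' n = 1.
Proof.
rewrite /degree /nbrs size_filter.
rewrite (eq_count (a2 := pred1 a)); last first.
  move=> j /=; rewrite /e' eqxx /=.
  case: (eqVneq j a) => [->|Hja]; first by rewrite eq_sym a_neq_n Hna orbT.
  by rewrite [n == a]eq_sym (negbTE a_neq_n) /= !andbF.
by rewrite count_uniq_mem ?enum_uniq // mem_enum.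
Qed.

End Graph.

Definition toRel N (f : {ffun 'I_N * 'I_N -> bool}) : rel 'I_N := fun x y => f (x, y).

Lemma rel_eq N (e : rel 'I_N) : e = toRel [ffun p => e p.1 p.2].
Proof.
apply: functional_extensionality => x; apply: functional_extensionality => y.
by rewrite /toRel ffunE.
Qed.

Theorem lemma2 (N : nat) (gamma : 'I_N -> R) :
  2 <= N ->
  (forall i : 'I_N, (0 < gamma i)%R) ->
  (forall i j : 'I_N, i <= j -> (gamma i <= gamma j)%R) ->
  exists e : rel 'I_N,
    sum_rate_optimal gamma e /\
    (forall v : 'I_N, nat_of_ord v = N.-1 -> degree e v = 1).
Proof.
move=> HN Hpos Hmono.
have H0 : 0 < N by apply: leq_trans HN.
have HnN : N.-1 < N by rewrite ltn_predL.
pose n : 'I_N := Ordinal HnN.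
have Hmax : forall j, (gamma j <= gamma n)%R.
  move=> j; apply: Hmono => /=; rewrite -ltnS prednK //; exact: ltn_ord.
have Hne : exists f, f \in enum {ffun 'I_N * 'I_N -> bool} /\ spanning_tree (toRel f).
  exists [ffun p => star n p.1 p.2]; split; first by rewrite mem_enum.
  rewrite -(rel_eq (star n)); exact: star_tree.
have [f [Pf Hf]] := exists_max (fun f => sum_rate gamma (toRel f)) Hne.
set e0 := toRel f in Pf Hf.
have Hopt : forall e', spanning_tree e' -> (sum_rate gamma e' <= sum_rate gamma e0)%R.
  move=> e' He'; rewrite (rel_eq e'); apply: Hf; first by rewrite mem_enum.
  by rewrite -rel_eq.
have [a Ha] : exists a, e0 n a.
  have [_ [Hc _]] := Pf.
  case: (eqVneq n (Ordinal H0)) => [Hn|Hn]; last exact: (nbr_exists Hc Hn).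
  have H1 : 1 < N := HN.
  apply: (nbr_exists (y := Ordinal H1) Hc).
  by rewrite Hn.
exists (e' e0 n a); split; [split|].
- exact: e'_tree.
- move=> e1 He1; apply: Rle_trans (Hopt _ He1) _; exact: e'_sum.
- move=> v Hv; have -> : v = n by apply: val_inj.
  exact: e'_deg.
Qed.
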